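(* Let $n\ge1$, let $\beta$ be a braid on $n$ strands with exponent sum $w$, and let $\Delta=\Delta_n$ be the Garside positive half-twist braid on $n$ strands. Then the coefficient of $v^{w-n+1}$ in $P_{\widehat\beta}(v,z)$ equals $(-1)^{n-1}$ times the coefficient of $v^{w+n^2-1}$ in $P_{\widehat{\beta\Delta^2}}(v,z)$ (coefficients regarded as Laurent polynomials in $z$).
   Context: For a braid $\gamma$, $\widehat\gamma$ denotes its usual closure, oriented by the braid direction. The Homfly polynomial $P_L(v,z)$ of an oriented link $L$ is the isotopy invariant normalized by $P=1$ on the unknot and satisfying $v^{-1}P_{L_+}-vP_{L_-}=zP_{L_0}$, where $L_+,L_-,L_0$ differ at one crossing which is positive, negative, resp. smoothed. Equivalently $P_D=v^{\mathrm{writhe}(D)}H_D$ with $H$ the framed Homfly polynomial ($H_{L_+}-H_{L_-}=zH_{L_0}$, positive kink multiplies by $v$, negative kink by $v^{-1}$, $H=1$ on the crossingless unknot). *)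

(* Defs.v *)
From mathcomp Require Import all_boot all_order all_algebra.
Set Implicit Arguments. Unset Strict Implicit. Unset Printing Implicit Defensive.
Import Order.TTheory GRing.Theory Num.Theory.
Local Open Scope ring_scope.

(* Laurent polynomials in v, z with integer coefficients are represented by  *)
(* their coefficient function:  L a b  = coefficient of v^a z^b.            *)
Definition laurent2 := int -> int -> int.

Definition laurent_one : laurent2 := fun a b => ((a == 0) && (b == 0))%:R.

(* Braid words.  A letter (i, true) is the standard generator sigma_i (a     *)
(* positive crossing), (i, false) is sigma_i^{-1}.  A word is a braid on n   *)
Definition letter := (nat * bool)%type.
Definition bword := seq letter.

Definition wf_bword (n : nat) (u : bword) : bool :=
  all (fun g : letter => (0 < g.1)%N && (g.1 < n)%N) u.

Definition exp_sum (u : bword) : int :=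
  \sum_(g <- u) (if g.2 then 1 else -1).

(* Garside positive half twist Delta_n =
   (s_1 s_2 ... s_{n-1}) (s_1 ... s_{n-2}) ... (s_1 s_2) (s_1). *)
Definition garside (n : nat) : bword :=
  flatten [seq [seq (j.+1, true) | j <- iota 0 k] | k <- rev (iota 1 n.-1)].

Definition braid_move (x y : bword) : Prop :=
  (exists i b, x = [:: (i, b); (i, ~~ b)] /\ y = [::])
  \/ (exists i j b c, (i.+2 <= j)%N /\ x = [:: (i, b); (j, c)] /\ y = [:: (j, c); (i, b)])
  \/ (exists i, x = [:: (i, true); (i.+1, true); (i, true)] /\
                y = [:: (i.+1, true); (i, true); (i.+1, true)]).

(* P : forall n, braid words on n strands -> Laurent polynomials, viewed as   *)
(* the Homfly polynomial of the closure.  The following properties (Markov's *)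
(* theorem + skein relation + normalisation) characterise the Homfly         *)
(* polynomial of braid closures uniquely:                                     *)
(*   v^{-1} P(L+) - v P(L-) = z P(L0),   P(unknot) = 1.                      *)
(* In coefficients: (v^{-1} A)_{a,b} = A_{a+1,b}, (v B)_{a,b} = B_{a-1,b},   *)
(* (z C)_{a,b} = C_{a,b-1}.                                                  *)
Definition is_homfly_of_closures (P : nat -> bword -> laurent2) : Prop :=
  [/\
      (forall n u x y w, wf_bword n (u ++ x ++ w) -> wf_bword n (u ++ y ++ w) ->
         braid_move x y -> P n (u ++ x ++ w) = P n (u ++ y ++ w)),
      (forall n u w, wf_bword n (u ++ w) -> P n (u ++ w) = P n (w ++ u)),
      (forall n u b, (0 < n)%N -> wf_bword n u -> P n.+1 (rcons u (n, b)) = P n u),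
      (forall n u w i, wf_bword n (u ++ (i, true) :: w) ->
         forall a b : int,
           P n (u ++ (i, true) :: w) (a + 1) b - P n (u ++ (i, false) :: w) (a - 1) b
           = P n (u ++ w) a (b - 1))
    & (* normalisation: the closure of the trivial 1-strand braid is the unknot *)
      P 1%N [::] = laurent_one].

(* Main.v *)
Require Import Defs.
From mathcomp Require Import all_boot all_order all_algebra.
From mathcomp Require Import zify ring lra.
Import GRing.Theory Num.Theory.
Local Open Scope ring_scope.

Set Implicit Arguments. Unset Strict Implicit. Unset Printing Implicit Defensive.

Lemma wf_cat M u w : wf_bword M (u ++ w) = wf_bword M u && wf_bword M w.
Proof. by rewrite /wf_bword all_cat. Qed.
Lemma wf_cons M g w : wf_bword M (g :: w) = ((0 < g.1)%N && (g.1 < M)%N) && wf_bword M w.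
Proof. by []. Qed.
Lemma wf_nil M : wf_bword M [::]. Proof. by []. Qed.
Lemma wf_mono M M' u : (M <= M')%N -> wf_bword M u -> wf_bword M' u.
Proof.
move=> le; apply: sub_all => g /andP[-> /= h]; exact: leq_trans h le.
Qed.

Lemma es_cat u w : exp_sum (u ++ w) = exp_sum u + exp_sum w.
Proof. by rewrite /exp_sum big_cat. Qed.
Lemma es_cons g w : exp_sum (g :: w) = (if g.2 then 1 else -1) + exp_sum w.
Proof. by rewrite /exp_sum big_cons. Qed.
Lemma es_nil : exp_sum [::] = 0. Proof. by rewrite /exp_sum big_nil. Qed.

Inductive breq (M : nat) : bword -> bword -> Prop :=
| brM u x y w : braid_move x y -> wf_bword M x -> wf_bword M y ->
     breq M (u ++ x ++ w) (u ++ y ++ w)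
| brR x : breq M x x
| brS x y : breq M x y -> breq M y x
| brT x y z : breq M x y -> breq M y z -> breq M x z.

Lemma breq_cat M u w x y : breq M x y -> breq M (u ++ x ++ w) (u ++ y ++ w).
Proof.
elim=> [u' x' y' w' m hx hy| x'| x' y' _ IH| x' y' z' _ IH1 _ IH2].
- have E : forall z, u ++ (u' ++ z ++ w') ++ w = (u ++ u') ++ z ++ (w' ++ w).
    by move=> z; rewrite !catA.
  rewrite !E; exact: brM.
- exact: brR.
- exact: brS.
- exact: brT IH1 IH2.
Qed.

Lemma breq_catl M u x y : breq M x y -> breq M (u ++ x) (u ++ y).
Proof. move=> h; have := breq_cat u [::] h; by rewrite !cats0. Qed.
Lemma breq_catr M w x y : breq M x y -> breq M (x ++ w) (y ++ w).
Proof. move=> h; exact: (breq_cat [::] w h). Qed.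
Lemma breq_cons M g x y : breq M x y -> breq M (g :: x) (g :: y).
Proof. exact: (breq_catl [:: g]). Qed.
Lemma breq_cat2 M x y x' y' : breq M x y -> breq M x' y' -> breq M (x ++ x') (y ++ y').
Proof. move=> h1 h2; apply: brT (breq_catr _ h1) (breq_catl _ h2). Qed.

Lemma breq_mono M M' x y : (M <= M')%N -> breq M x y -> breq M' x y.
Proof.
move=> le; elim.
- move=> u x' y' w m hx hy; apply: brM => //; exact: wf_mono hx || exact: wf_mono hy.
- by move=> *; apply: brR.
- by move=> *; apply: brS.
- by move=> *; apply: brT; eassumption.
Qed.

Lemma bm_wf M x y : braid_move x y -> wf_bword M x -> wf_bword M y -> True.
Proof. by []. Qed.

Lemma breq_wf M x y : breq M x y -> wf_bword M x = wf_bword M y.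
Proof.
elim=> [u x' y' w _ hx hy| //| x' y' _ -> //| x' y' z _ -> _ ->] //.
by rewrite !wf_cat hx hy.
Qed.

Lemma bm_es x y : braid_move x y -> exp_sum x = exp_sum y.
Proof.
case=> [[i [b [-> ->]]]|[[i [j [b [c [_ [-> ->]]]]]]|[i [-> ->]]]].
- rewrite !es_cons es_nil; by case: b => /=; lia.
- rewrite !es_cons; lia.
- by rewrite !es_cons.
Qed.

Lemma breq_es M x y : breq M x y -> exp_sum x = exp_sum y.
Proof.
elim=> [u x' y' w m _ _| //| x' y' _ -> //| x' y' z _ -> _ ->] //.
by rewrite !es_cat (bm_es m).
Qed.

Lemma br_cancel M i b : (0 < i)%N -> (i < M)%N -> breq M [:: (i, b); (i, ~~ b)] [::].
Proof.
move=> h1 h2; have := @brM M [::] [:: (i, b); (i, ~~ b)] [::] [::].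
rewrite /= ?cats0; apply.
- by left; exists i, b.
- by rewrite /wf_bword /= h1 h2.
- by [].
Qed.

Lemma br_far M i j b c : (0 < i)%N -> (i.+2 <= j)%N -> (j < M)%N ->
  breq M [:: (i, b); (j, c)] [:: (j, c); (i, b)].
Proof.
move=> h1 h2 h3; have := @brM M [::] [:: (i, b); (j, c)] [:: (j, c); (i, b)] [::].
rewrite /= ?cats0; have hiM : (i < M)%N by lia.
have h0j : (0 < j)%N by lia.
apply.
- by right; left; exists i, j, b, c.
- by rewrite /wf_bword /= h1 hiM h0j h3.
- by rewrite /wf_bword /= h1 hiM h0j h3.
Qed.

Lemma br_three M i : (0 < i)%N -> (i.+1 < M)%N ->
  breq M [:: (i, true); (i.+1, true); (i, true)] [:: (i.+1, true); (i, true); (i.+1, true)].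
Proof.
move=> h1 h2; have := @brM M [::] [:: (i, true); (i.+1, true); (i, true)]
   [:: (i.+1, true); (i, true); (i.+1, true)] [::].
rewrite /= ?cats0; have hiM : (i < M)%N by lia.
apply.
- by right; right; exists i.
- by rewrite /wf_bword /= h1 hiM h2.
- by rewrite /wf_bword /= h1 hiM h2.
Qed.

Definition far (j : nat) (c : bword) :=
  all (fun g : letter => (g.1.+2 <= j)%N || (j.+2 <= g.1)%N) c.

Lemma br_comm M j e c : (0 < j)%N -> (j < M)%N -> wf_bword M c -> far j c ->
  breq M ((j, e) :: c) (c ++ [:: (j, e)]).
Proof.
move=> h1 h2; elim: c => [|g c IH] /=; first by move=> *; exact: brR.
move=> /andP[/andP[g1 g2] wc] /andP[fg fc].
apply: brT (breq_cons g (IH wc fc)).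
case: g g1 g2 fg => a b' /= g1 g2 fg.
case/orP: fg => fg.
- apply: brS; have := br_far b' e g1 fg h2.
  by move/(breq_catr c).
- have := br_far e b' h1 fg g2.
  by move/(breq_catr c).
Qed.

Definition cw (k : nat) : bword := locked [seq (j.+1, true) | j <- iota 0 k].
Definition dw (k : nat) : bword := locked (rev (cw k)).
Definition Jw (k : nat) : bword := locked (dw k ++ cw k).
Lemma cwE k : cw k = [seq (j.+1, true) | j <- iota 0 k]. Proof. by rewrite /cw -lock. Qed.
Lemma dwE k : dw k = rev (cw k). Proof. by rewrite /dw -lock. Qed.
Lemma JwE k : Jw k = dw k ++ cw k. Proof. by rewrite /Jw -lock. Qed.
Lemma cw0 : cw 0 = [::]. Proof. by rewrite cwE. Qed.
Lemma dw0 : dw 0 = [::]. Proof. by rewrite dwE cw0. Qed.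
Lemma Jw0 : Jw 0 = [::]. Proof. by rewrite JwE dw0 cw0. Qed.

Lemma cwS k : cw k.+1 = cw k ++ [:: (k.+1, true)].
Proof. by rewrite !cwE -{1}addn1 iotaD map_cat /= add0n. Qed.
Lemma dwS k : dw k.+1 = (k.+1, true) :: dw k.
Proof. by rewrite !dwE cwS rev_cat. Qed.
Lemma JwS k : Jw k.+1 = (k.+1, true) :: Jw k ++ [:: (k.+1, true)].
Proof. by rewrite !JwE dwS cwS /= catA. Qed.

Lemma wf_cw M k : (k < M)%N -> wf_bword M (cw k).
Proof.
elim: k => [|k IH] h; first by rewrite cw0.
rewrite cwS wf_cat IH ?(ltnW h) //= /wf_bword /=; lia.
Qed.
Lemma wf_dw M k : (k < M)%N -> wf_bword M (dw k).
Proof. by move=> h; rewrite dwE /wf_bword all_rev; exact: wf_cw. Qed.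
Lemma wf_Jw M k : (k < M)%N -> wf_bword M (Jw k).
Proof. by move=> h; rewrite JwE wf_cat wf_cw ?wf_dw. Qed.

Lemma far_wf j j' c : wf_bword j' c -> (j' < j)%N -> far j c.
Proof.
move=> h le; apply: sub_all h => g /andP[_ h]; apply/orP; left; lia.
Qed.

Lemma es_cw k : exp_sum (cw k) = k%:Z.
Proof. elim: k => [|k IH]; first by rewrite cw0 es_nil. rewrite cwS es_cat IH es_cons es_nil /=; lia. Qed.

Lemma c_lemma M k i : (2 <= i)%N -> (i <= k)%N -> (k < M)%N ->
  breq M ((i, true) :: cw k) (cw k ++ [:: (i.-1, true)]).
Proof.
elim: k i => [|k IH] i h1 h2 h3; first by lia.
rewrite cwS; case: (ltnP i k.+1) => hik.
- have := IH i h1 ltac:(lia) ltac:(lia) => /(breq_catr [:: (k.+1, true)]) /= h.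
  apply: brT h _; rewrite -!catA; apply: breq_catl => /=.
  apply: br_far; lia.
- have ei : i = k.+1 by lia.
  subst i; case: k IH h1 h2 h3 hik => [|k] IH h1 h2 h3 hik; first by lia.
  rewrite cwS -catA /=.
  have hc : breq M ((k.+2, true) :: cw k) (cw k ++ [:: (k.+2, true)]).
    apply: br_comm; first lia; first lia; first (apply: wf_cw; lia).
    apply: (far_wf (j':=k.+1)); [apply: wf_cw; lia | lia].
  apply: brT (breq_catr [:: (k.+1, true); (k.+2, true)] hc) _.
  rewrite -catA /= -catA /=; apply: breq_catl.
  apply: brS; apply: br_three; lia.
Qed.

Lemma d_lemma M k j : (1 <= j)%N -> (j < k)%N -> (k < M)%N ->
  breq M ((j, true) :: dw k) (dw k ++ [:: (j.+1, true)]).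
Proof.
elim: k j => [|k IH] j h1 h2 h3; first by lia.
rewrite dwS; case: (ltnP j k) => hjk.
- have := br_far true true h1 (_ : (j.+2 <= k.+1)%N) h3 => /(_ ltac:(lia)).
  move/(breq_catr (dw k)) => /= h; apply: brT h _.
  apply: breq_cons; apply: IH; lia.
- have ej : j = k by lia.
  subst j; case: k IH h1 h2 h3 hjk => [|k] IH h1 h2 h3 hjk; first by lia.
  rewrite dwS.
  have := br_three h1 h3 => /(breq_catr (dw k)) /= h; apply: brT h _.
  do 2 apply: breq_cons.
  apply: br_comm; first lia; first lia; first (apply: wf_dw; lia).
  apply: (far_wf (j':=k.+1)); [apply: wf_dw; lia | lia].
Qed.

Lemma J_letter M k i e : (1 <= i)%N -> (i < k)%N -> (k < M)%N ->
  breq M ((i, e) :: Jw k) (Jw k ++ [:: (i, e)]).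
Proof.
move=> h1 h2 h3.
have Ht : breq M ((i, true) :: Jw k) (Jw k ++ [:: (i, true)]).
  rewrite !JwE; have := d_lemma h1 h2 h3 => /(breq_catr (cw k)) h; apply: brT h _.
  rewrite -!catA; apply: breq_catl => /=.
  have := @c_lemma M k i.+1 ltac:(lia) ltac:(lia) h3; by [].
case: e; first exact: Ht.
have s1 : breq M ((i, false) :: Jw k) ((i, false) :: (Jw k ++ [:: (i, true); (i, false)])).
  apply: breq_cons; apply: brS.
  have hiM : (i < M)%N by lia.
  have h := breq_cat (Jw k) [::] (@br_cancel M i true h1 hiM).
  by rewrite /= !cats0 in h.
apply: brT s1 _.
have s2 := breq_cons (i, false) (breq_catr [:: (i, false)] (brS Ht)).
rewrite -catA /= in s2.
apply: brT s2 _.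
have hiM : (i < M)%N by lia.
exact: (breq_cat [::] (Jw k ++ [:: (i, false)]) (@br_cancel M i false h1 hiM)).
Qed.

Lemma J_word M k y : (k < M)%N -> wf_bword k y -> breq M (y ++ Jw k) (Jw k ++ y).
Proof.
move=> hk; elim: y => [|g y IH] /=; first by rewrite cats0 => _; exact: brR.
case: g => i e /andP[/andP[/= h1 h2] wy].
apply: brT (breq_cons _ (IH wy)) _.
have := @J_letter M k i e h1 h2 hk => /(breq_catr y); by rewrite -catA.
Qed.

Lemma garsideS k : garside k.+1 = cw k ++ garside k.
Proof.
case: k => [|k]; first by rewrite cw0.
rewrite cwE /garside (_ : k.+2.-1 = k + 1)%N; last by rewrite addn1.
rewrite iotaD rev_cat /=.
by rewrite add0n.
Qed.

Lemma wf_garside k : wf_bword k (garside k).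
Proof.
elim: k => [|k IH] //; rewrite garsideS wf_cat wf_cw //.
exact: wf_mono IH.
Qed.

Lemma es_garside2 k : exp_sum (garside k) + exp_sum (garside k) = (k * k.-1)%N%:Z.
Proof.
elim: k => [|k IH]; first by rewrite /garside /= es_nil.
rewrite garsideS es_cat es_cw.
have -> : (k%:Z + exp_sum (garside k) + (k%:Z + exp_sum (garside k))) =
   2 * k%:Z + (exp_sum (garside k) + exp_sum (garside k)) by ring.
rewrite IH /=; case: k {IH} => [|k] //=; lia.
Qed.

Lemma Delta_d M k : (k < M)%N -> breq M (garside k.+1) (garside k ++ dw k).
Proof.
elim: k => [|k IH] h; first by rewrite dw0; apply: brR.
rewrite garsideS.
apply: brT (breq_catl _ (IH ltac:(lia))) _.
rewrite garsideS cwS dwS -!catA /=.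
apply: breq_catl.
have w1 : wf_bword M (garside k) by apply: wf_mono (wf_garside k); lia.
have f1 : far k.+1 (garside k) by apply: far_wf (wf_garside k) _.
have := @br_comm M k.+1 true (garside k) ltac:(lia) h w1 f1.
by move/(breq_catr (dw k)); rewrite -catA.
Qed.

Lemma Delta2 M k : (k < M)%N ->
  breq M (garside k.+1 ++ garside k.+1) (garside k ++ garside k ++ Jw k).
Proof.
move=> h.
rewrite {2}garsideS.
apply: brT (breq_catr _ (Delta_d h)) _.
rewrite -!catA; apply: breq_catl.
rewrite catA -JwE.
apply: brS; apply: J_word => //; exact: wf_garside.
Qed.

Ltac nlia := repeat match goal with H : _ |- _ => lazymatch type of H with
     | is_true (leq _ _) => fail | (_ = _ :> nat) => fail | nat => fail | _ => clear H end end; lia.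

Definition sgood M (Q : bword -> Prop) :=
  [/\ (forall x y, breq M x y -> wf_bword M x -> Q x -> Q y),
      (forall u w i, wf_bword M (u ++ (i, true) :: w) ->
          Q (u ++ (i, false) :: w) -> Q (u ++ w) -> Q (u ++ (i, true) :: w))
    & (forall u w i, wf_bword M (u ++ (i, true) :: w) ->
          Q (u ++ (i, true) :: w) -> Q (u ++ w) -> Q (u ++ (i, false) :: w))].

Lemma split_first (p : pred letter) y : has p y ->
  exists a g r, y = a ++ g :: r /\ ~~ has p a /\ p g.
Proof.
elim: y => [|g y IH] //= /orP[pg|hy].
- by exists [::], g, y.
- case: (boolP (p g)) => pg; first by exists [::], g, y.
  have [a [g' [r [-> [ha pg']]]]] := IH hy.
  by exists (g :: a), g', r; rewrite /= (negbTE pg) ha.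
Qed.

Lemma wf_nos s a : wf_bword s.+1 a -> ~~ has (fun g : letter => g.1 == s) a -> wf_bword s a.
Proof.
elim: a => [|g a IH] //= /andP[/andP[h1 h2] wa]; rewrite negb_or => /andP[ng na].
rewrite h1 IH // andbT; move: h2 ng; clear h1; case: g => i e /=; nlia.
Qed.

Lemma wf_rel M a b (g : letter) : wf_bword M (a ++ g :: b) -> wf_bword M (a ++ b).
Proof. by rewrite !wf_cat /= => /andP[-> /andP[_ ->]]. Qed.

Lemma wf_flip M a b i e e' : wf_bword M (a ++ (i, e) :: b) = wf_bword M (a ++ (i, e') :: b).
Proof. by rewrite !wf_cat. Qed.

Ltac wfh := repeat match goal with
 | H : is_true (wf_bword _ (_ ++ _)) |- _ => rewrite wf_cat in H
 | H : is_true (wf_bword _ (_ :: _)) |- _ => rewrite wf_cons in H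
 | H : is_true (_ && _) |- _ => let H1 := fresh "H" in let H2 := fresh "H" in case/andP: H => H1 H2
 end.

Ltac wfs := wfh; rewrite ?(wf_cat, wf_cons, wf_nil); repeat (apply/andP; split);
  first [ assumption | done | (apply: wf_cw; simpl; nlia) | (apply: wf_dw; simpl; nlia)
        | (apply: wf_Jw; simpl; nlia)
        | (match goal with H : is_true (wf_bword _ ?u) |- is_true (wf_bword _ ?u) =>
             apply: (wf_mono _ H); simpl; nlia end)
        | (apply: wf_mono; last apply: wf_garside; simpl; nlia) | (simpl in *; nlia) ].

Lemma bspan m : forall Q, sgood m.+1 Q -> (forall a, wf_bword m a -> Q a) ->
  ((0 < m)%N -> forall a b, wf_bword m a -> wf_bword m b -> Q (a ++ (m, true) :: b)) ->
  forall y, wf_bword m.+1 y -> Q y.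
Proof.
elim: m => [|m IHm] Q [Hc Hp Hn] H1 H2 y wy.
  case: y wy => [_|[i e] y /andP[/andP[h1 h2] _]]; [exact: H1 | simpl in *; nlia].
set s := m.+1.
have es : s = m.+1 by [].
pose p := fun g : letter => g.1 == s.
pose cnt y := count p y.
suff: forall n y, wf_bword m.+2 y -> (cnt y <= n)%N -> Q y by move=> /(_ (cnt y) y wy); apply.
elim=> [|n IHn] {}y {}wy hc.
  apply: H1; apply: wf_nos wy _; by rewrite has_count -leqNgt.
case: (boolP (has p y)) => hy; last by apply: H1; apply: wf_nos wy _.
have [a [[i e] [r [ey [ha /= /eqP pg]]]]] := split_first hy.
simpl in pg; subst y i.
have cy : cnt (a ++ (s, e) :: r) = (cnt a + (cnt r).+1)%N by rewrite /cnt count_cat /= /p /= eqxx.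
have ca : cnt a = 0%N by apply/eqP; rewrite /cnt -leqn0 leqNgt -has_count.
have wa : wf_bword s a by apply: wf_nos (_ : wf_bword s.+1 a) ha; move: wy; rewrite wf_cat => /andP[].
case: (boolP (has p r)) => hr.
- have [c [[i f] [d [er [hc' /= /eqP pf]]]]] := split_first hr.
  simpl in pf; subst r i.
  have cc : cnt c = 0%N by apply/eqP; rewrite /cnt -leqn0 leqNgt -has_count.
  have cr : cnt (c ++ (s, f) :: d) = (cnt d).+1 by rewrite /cnt count_cat /= /p /= eqxx -/(cnt c) cc.
  rewrite cy ca cr in hc.
  have wr : wf_bword m.+2 (c ++ (s, f) :: d) by move: wy; rewrite wf_cat /= => /and3P[].
  have wc : wf_bword s c by apply: wf_nos (_ : wf_bword s.+1 c) hc'; move: wr; rewrite wf_cat => /andP[].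
  have wd : wf_bword m.+2 d by move: wr; rewrite wf_cat /= => /and3P[].
  have cnt_cat : forall u w, cnt (u ++ w) = (cnt u + cnt w)%N by move=> u w; rewrite /cnt count_cat.
  have cs : forall b, cnt [:: (s, b)] = 1%N by move=> b; rewrite /cnt /= /p /= eqxx.
  have cS : forall b u, cnt ((s, b) :: u) = (cnt u).+1 by move=> b u; rewrite /cnt /= /p /= eqxx.
  have wsM : forall u, wf_bword s u -> wf_bword m.+2 u by move=> u; apply: wf_mono.
  have wfs : forall b, wf_bword m.+2 [:: (s, b)] by move=> b; rewrite /wf_bword /= /s; nlia.
  have SC : Q (a ++ (s, true) :: c ++ (s, true) :: d).
    pose Q' := fun beta => Q (a ++ (s, true) :: beta ++ (s, true) :: d).
    have E : forall u X, a ++ (s, true) :: ((u ++ X) ++ (s, true) :: d) =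
                       (a ++ (s, true) :: u) ++ (X ++ (s, true) :: d).
      by move=> u X; rewrite -!catA.
    have wQ : forall beta, wf_bword s beta -> wf_bword m.+2 (a ++ (s, true) :: beta ++ (s, true) :: d).
      move=> beta wb; wfs.
    apply: (IHm Q') => //.
    + split.
      * move=> x x' hxx' wx; rewrite /Q'; apply: Hc; last by apply: wQ.
        have := breq_cat (a ++ [:: (s, true)]) ((s, true) :: d) (breq_mono (leqnSn _) hxx').
        by rewrite -!catA.
      * move=> u w i wuw; rewrite /Q' !E => h1 h2; apply: Hp h1 h2.
        by have := wQ _ wuw; rewrite E.
      * move=> u w i wuw; rewrite /Q' !E => h1 h2; apply: Hn h1 h2.
        by have := wQ _ wuw; rewrite E.
    + move=> a' wa'; rewrite /Q'.
      set X := a ++ a' ++ (s, true) :: (s, true) :: d.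
      have wa'M : wf_bword m.+2 a' by apply: wf_mono wa'; nlia.
      have wX : wf_bword m.+2 X by rewrite /X; wfs.
      have QX : Q X.
        rewrite /X catA; apply: Hp; first by wfs.
        -- apply: (Hc (a ++ a' ++ d)).
           ++ have := breq_cat (a ++ a') d (@br_cancel m.+2 s false ltac:(nlia) ltac:(nlia)).
              by rewrite -!catA => h; apply: brS.
           ++ wfs.
           ++ apply: IHn; first by wfs.
              rewrite !cnt_cat ca.
              have -> : cnt a' = 0%N.
                apply/eqP; rewrite /cnt -leqn0 leqNgt -has_count; apply/hasP => -[g gi /eqP pg'].
                by move: wa' => /allP /(_ g gi) /andP[_]; rewrite pg'; nlia.
              nlia.
        -- rewrite -catA; apply: IHn; first by wfs.
           rewrite !cnt_cat ca /= /p /= eqxx.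
           have -> : cnt a' = 0%N.
             apply/eqP; rewrite /cnt -leqn0 leqNgt -has_count; apply/hasP => -[g gi /eqP pg'].
             by move: wa' => /allP /(_ g gi) /andP[_]; rewrite pg'; nlia.
           nlia.
      apply: (Hc X _ _ wX QX).
      rewrite /X; apply: brS; apply: breq_catl.
      have := @br_comm m.+2 s true a' ltac:(nlia) ltac:(nlia) wa'M (far_wf wa' (ltnSn _)).
      by move/(breq_catr ((s, true) :: d)); rewrite -catA.
    + move=> m0 a' b' wa' wb'; rewrite /Q'.
      have wa'M : wf_bword m.+2 a' by apply: wf_mono wa'; nlia.
      have wb'M : wf_bword m.+2 b' by apply: wf_mono wb'; nlia.
      set Z := a ++ a' ++ [:: (m, true); (s, true); (m, true)] ++ b' ++ d.
      have wZ : wf_bword m.+2 Z by rewrite /Z; wfs.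
      have QZ : Q Z.
        apply: IHn => //.
        have cnt0 : forall u, wf_bword s u -> cnt u = 0%N.
          elim=> [|[j b] u IH] //= /andP[/andP[_ hj] wu].
          rewrite /cnt /= -/(cnt u) IH // /p /=.
          by have -> : (j == s) = false by apply/eqP; nlia.
        have c3 : cnt [:: (m, true); (s, true); (m, true)] = 1%N.
          rewrite /cnt /p /= eqxx.
          by have -> : (m == s) = false by apply/eqP; nlia.
        have wa's : wf_bword s a' by apply: wf_mono wa'; nlia.
        have wb's : wf_bword s b' by apply: wf_mono wb'; nlia.
        rewrite /Z !cnt_cat ca c3 (cnt0 a' wa's) (cnt0 b' wb's).
        nlia.
      apply: (Hc Z _ _ wZ QZ).
      rewrite /Z.
        have s1 := breq_cat (a ++ a') (b' ++ d) (@br_three m.+2 m m0 ltac:(nlia)).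
        rewrite -!catA /= in s1; apply: brT s1 _.
        have s2 := @br_comm m.+2 s true b' ltac:(nlia) ltac:(nlia) wb'M (far_wf wb' (ltnSn _)).
        have s2' := breq_cat (a ++ a' ++ [:: (s, true); (m, true)]) d s2.
        rewrite -!catA /= in s2'; apply: brT s2' _.
        have s3 := @br_comm m.+2 s true a' ltac:(nlia) ltac:(nlia) wa'M (far_wf wa' (ltnSn _)).
        have s3' := breq_cat a ((m, true) :: b' ++ (s, true) :: d) (brS s3).
        by rewrite -!catA /= in s3' *.
  have T : forall e', Q (a ++ (s, e') :: c ++ (s, true) :: d).
    case; first exact: SC.
    apply: Hn => //.
      by wfs.
    apply: IHn; first by wfs.
    by rewrite !cnt_cat ca cc cS; nlia.
  destruct f; first exact: T.
  have E : forall X, a ++ (s, e) :: c ++ X = (a ++ (s, e) :: c) ++ X by move=> X; rewrite -catA.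
  rewrite E; apply: Hn.
  + by rewrite -E; wfs.
  + by rewrite -E.
  + rewrite -catA; apply: IHn; first by wfs.
    by rewrite !cnt_cat ca cS cc; nlia.
- have wr : wf_bword s r by apply: wf_nos (_ : wf_bword s.+1 r) hr; move: wy; rewrite wf_cat /= => /and3P[].
  have H2' : Q (a ++ (s, true) :: r) by apply: H2.
  destruct e; first exact: H2'.
  apply: Hn => //; first by rewrite (wf_flip _ _ _ _ _ false).
  apply: IHn; first exact: wf_rel wy.
  rewrite /cnt count_cat -/(cnt a) ca; rewrite has_count -leqNgt leqn0 in hr.
  by rewrite (eqP hr).
Qed.

Ltac elia := repeat match goal with |- context [exp_sum ?x] => let E := fresh "E" in move: (exp_sum x) => E end; nlia.

Definition Hi (P : nat -> bword -> laurent2) M b k := P M b (exp_sum b + M%:Z - 1) k.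
Definition Lo (P : nat -> bword -> laurent2) M b k := P M b (exp_sum b - M%:Z + 1) k.

Lemma P_breq P (HP : is_homfly_of_closures P) M x y :
  breq M x y -> wf_bword M x -> P M x = P M y.
Proof.
case: HP => Hbr _ _ _ _.
elim=> [u x' y' w m hx hy| //| x' y' h IH| x' y' z h1 IH1 h2 IH2] wx.
- apply: Hbr => //; move: wx; rewrite !wf_cat hx hy //.
- by rewrite IH // (breq_wf h).
- by rewrite IH1 // IH2 // -(breq_wf h1).
Qed.

Lemma Hi_breq P (HP : is_homfly_of_closures P) M x y k :
  breq M x y -> wf_bword M x -> Hi P M x k = Hi P M y k.
Proof. by move=> h w; rewrite /Hi (P_breq HP h w) (breq_es h). Qed.
Lemma Lo_breq P (HP : is_homfly_of_closures P) M x y k :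
  breq M x y -> wf_bword M x -> Lo P M x k = Lo P M y k.
Proof. by move=> h w; rewrite /Lo (P_breq HP h w) (breq_es h). Qed.

Lemma es_comm u w : exp_sum (u ++ w) = exp_sum (w ++ u).
Proof. by rewrite !es_cat addrC. Qed.

Lemma Hi_conj P (HP : is_homfly_of_closures P) M u w k :
  wf_bword M (u ++ w) -> Hi P M (u ++ w) k = Hi P M (w ++ u) k.
Proof. case: HP => _ Hc _ _ _ h; by rewrite /Hi Hc // es_comm. Qed.
Lemma Lo_conj P (HP : is_homfly_of_closures P) M u w k :
  wf_bword M (u ++ w) -> Lo P M (u ++ w) k = Lo P M (w ++ u) k.
Proof. case: HP => _ Hc _ _ _ h; by rewrite /Lo Hc // es_comm. Qed.

Lemma es_sk u w i b : exp_sum (u ++ (i, b) :: w) = exp_sum (u ++ w) + (if b then Posz 1 else Negz 0).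
Proof. rewrite !es_cat es_cons; case: b => /=; nlia. Qed.

Lemma P_skein P (HP : is_homfly_of_closures P) M u w i a k :
  wf_bword M (u ++ (i, true) :: w) ->
  P M (u ++ (i, true) :: w) a k = P M (u ++ (i, false) :: w) (a - 2) k + P M (u ++ w) (a - 1) (k - 1).
Proof.
case: HP => _ _ _ Hs _ h.
have := Hs M u w i h (a - 1) k.
rewrite subrK (_ : a - 1 - 1 = a - 2); last by nlia.
move=> <-; ring.
Qed.

Lemma Hi_skein P (HP : is_homfly_of_closures P) M u w i k :
  wf_bword M (u ++ (i, true) :: w) ->
  Hi P M (u ++ (i, true) :: w) k = Hi P M (u ++ (i, false) :: w) k + Hi P M (u ++ w) (k - 1).
Proof.
move=> h; rewrite /Hi (P_skein HP _ _ h) !es_sk.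
congr (P _ _ _ _ + P _ _ _ _); nlia.
Qed.

Lemma Lo_skein P (HP : is_homfly_of_closures P) M u w i k :
  wf_bword M (u ++ (i, true) :: w) ->
  Lo P M (u ++ (i, true) :: w) k = Lo P M (u ++ (i, false) :: w) k + Lo P M (u ++ w) (k - 1).
Proof.
move=> h; rewrite /Lo (P_skein HP _ _ h) !es_sk.
congr (P _ _ _ _ + P _ _ _ _); nlia.
Qed.

Lemma P_markov P (HP : is_homfly_of_closures P) M x b :
  (0 < M)%N -> wf_bword M x -> P M.+1 (x ++ [:: (M, b)]) = P M x.
Proof. case: HP => _ _ Hm _ _ h1 h2; by rewrite cats1 Hm. Qed.

Lemma wf_snoc M x b : (0 < M)%N -> wf_bword M x -> wf_bword M.+1 (x ++ [:: (M, b)]).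
Proof. move=> h1 h2; rewrite wf_cat (wf_mono (leqnSn _) h2) /wf_bword /= h1 ltnSn //. Qed.

Lemma P_split P (HP : is_homfly_of_closures P) M x a k :
  (0 < M)%N -> wf_bword M x ->
  P M.+1 x a k = P M x (a + 1) (k + 1) - P M x (a - 1) (k + 1).
Proof.
move=> h1 h2.
case: HP => [Hbr Hc Hm Hs Ho].
have := Hs M.+1 x [::] M (wf_snoc true h1 h2) a (k + 1).
rewrite !cats1 !Hm // cats0 addrK => <- //.
Qed.

Lemma P_rot P (HP : is_homfly_of_closures P) M a b e :
  (0 < M)%N -> wf_bword M a -> wf_bword M b ->
  P M.+1 (a ++ (M, e) :: b) = P M (b ++ a).
Proof.
move=> h0 ha hb.
case: HP => [Hbr Hc Hm Hs Ho].
have -> : a ++ (M, e) :: b = (a ++ [:: (M, e)]) ++ b by rewrite -catA.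
rewrite Hc; last by rewrite -catA; wfs.
by rewrite catA cats1 Hm //; wfs.
Qed.

Lemma wf1 x : wf_bword 1 x -> x = [::].
Proof. case: x => [|[i e] x] //= /andP[/andP[h1 h2] _]; nlia. Qed.

Lemma MFW P (HP : is_homfly_of_closures P) M : (0 < M)%N -> forall x, wf_bword M x ->
  forall (a k : int), (a < exp_sum x - M%:Z + 1) || (exp_sum x + M%:Z - 1 < a) -> P M x a k = 0.
Proof.
case: M => [//|M] _; elim: M => [|M IH] x wx a k ha.
  move: ha; rewrite (wf1 wx); case: HP => _ _ _ _ -> /=.
  rewrite /laurent_one es_nil => ha.
  by have -> : (a == 0) = false by apply/eqP; move: ha; nlia.
pose Q := fun y => forall (a k : int), (a < exp_sum y - M.+2%:Z + 1) || (exp_sum y + M.+2%:Z - 1 < a) ->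
      P M.+2 y a k = 0.
suff Qx : Q x by exact: Qx.
move: x wx {a k ha}; apply: (@bspan M.+1 Q).
- split.
  + move=> x1 y1 h w1 q a1 k1 ha1; rewrite -(P_breq HP h w1); apply: q; by rewrite (breq_es h).
  + move=> u w i wu q1 q2 a1 k1 ha1; rewrite (P_skein HP _ _ wu) q1 ?q2 ?addr0 //.
    * move: ha1; rewrite !es_sk /=; elia.
    * move: ha1; rewrite !es_sk /=; elia.
  + move=> u w i wu q1 q2 a1 k1 ha1.
    have e := P_skein HP (a1 + 2) k1 wu.
    rewrite addrK q1 in e; last by move: ha1; rewrite !es_sk /=; elia.
    rewrite q2 in e; last by move: ha1; rewrite !es_sk /=; elia.
    by rewrite addr0 in e; rewrite -e.
- move=> y wy a1 k1 ha1; rewrite P_split // !IH //.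
  + move: ha1; nlia.
  + move: ha1; nlia.
- move=> _ y z wy wz a1 k1 ha1; rewrite P_rot //; apply: IH; first by rewrite wf_cat wz wy.
  move: ha1; rewrite es_sk (es_comm z y) /=; elia.
Qed.

Lemma T1 P (HP : is_homfly_of_closures P) M a b k :
  (0 < M)%N -> wf_bword M a -> wf_bword M b -> Hi P M.+1 (a ++ (M, true) :: b) k = 0.
Proof.
move=> h0 ha hb; rewrite /Hi P_rot // (MFW HP h0) //; first by rewrite wf_cat hb ha.
rewrite es_sk (es_comm a b) /=; apply/orP; right; elia.
Qed.

Lemma T2 P (HP : is_homfly_of_closures P) M x k :
  (0 < M)%N -> wf_bword M x -> Hi P M.+1 x k = - Hi P M x (k + 1).
Proof.
move=> h0 hx; rewrite /Hi P_split // (MFW HP h0) //; last by apply/orP; right; elia.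
rewrite sub0r; congr (- P _ _ _ _); elia.
Qed.

Lemma L1 P (HP : is_homfly_of_closures P) M a b k :
  (0 < M)%N -> wf_bword M a -> wf_bword M b -> Lo P M.+1 (a ++ (M, true) :: b) k = Lo P M (b ++ a) k.
Proof.
move=> h0 ha hb; rewrite /Lo P_rot // es_sk (es_comm a b) /=; congr (P _ _ _ _); elia.
Qed.

Lemma L2 P (HP : is_homfly_of_closures P) M x k :
  (0 < M)%N -> wf_bword M x -> Lo P M.+1 x k = Lo P M x (k + 1).
Proof.
move=> h0 hx; rewrite /Lo P_split // [X in _ - X](MFW HP h0) //; last by apply/orP; left; elia.
rewrite subr0; congr (P _ _ _ _); elia.
Qed.

Lemma Zl P (HP : is_homfly_of_closures P) N y k :
  (0 < N)%N -> wf_bword N y ->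
  Hi P N.+1 (y ++ Jw N ++ [:: (N, true)]) k = Hi P N.+1 (y ++ Jw N) (k - 1).
Proof.
case: N => [//|N] _ hy; rewrite JwS.
have wJ : wf_bword N.+1 (Jw N) by apply: wf_Jw.
have E1 : y ++ ((N.+1, true) :: Jw N ++ [:: (N.+1, true)]) ++ [:: (N.+1, true)] =
   (y ++ (N.+1, true) :: Jw N ++ [:: (N.+1, true)]) ++ (N.+1, true) :: [::] by rewrite -!catA.
rewrite E1 (Hi_skein HP); last by rewrite -E1; wfs.
rewrite cats0 -[RHS]add0r; congr (_ + _).
have E2 : (y ++ (N.+1, true) :: Jw N ++ [:: (N.+1, true)]) ++ (N.+1, false) :: [::] =
   (y ++ (N.+1, true) :: Jw N) ++ [:: (N.+1, true); (N.+1, ~~ true)] ++ [::]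
   by rewrite -!catA /= -!catA.
rewrite E2 (Hi_breq HP _ (breq_cat _ _ (@br_cancel N.+2 N.+1 true _ _))) //; last by rewrite -E2; wfs.
rewrite cats0; apply: T1 => //.
Qed.


Lemma Kstep P (HP : is_homfly_of_closures P) m :
  ((0 < m)%N -> forall y, wf_bword m y -> forall k, Hi P m.+1 (y ++ Jw m) k = - Hi P m y (k + 1)) ->
  forall y, wf_bword m.+1 y -> forall k, Hi P m.+2 (y ++ Jw m.+1) k = - Hi P m.+1 y (k + 1).
Proof.
move=> IHo.
pose Q := fun y => forall k, Hi P m.+2 (y ++ Jw m.+1) k = - Hi P m.+1 y (k + 1).
have wJ1 : wf_bword m.+2 (Jw m.+1) by apply: wf_Jw.
have wJ : wf_bword m.+1 (Jw m) by apply: wf_Jw.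
have wJ' : wf_bword m.+2 (Jw m) by apply: wf_Jw; nlia.
move=> y wy; move: y wy; apply: (@bspan m Q).
- split.
  + move=> x x' h wx q k.
    have e1 := Hi_breq HP (k + 1) h wx.
    have wxJ : wf_bword m.+2 (x ++ Jw m.+1) by wfs.
    have e2 := Hi_breq HP k (breq_catr (Jw m.+1) (breq_mono (leqnSn _) h)) wxJ.
    by rewrite -e1 -e2; exact: q.
  + move=> u w i wu q1 q2 k.
    have wu2 : wf_bword m.+2 (u ++ (i, true) :: w ++ Jw m.+1) by wfs.
    have s1 := Hi_skein HP k wu2.
    have s2 := Hi_skein HP (k + 1) wu.
    have := q1 k; have := q2 (k - 1).
    rewrite -?catA ?cat_cons => q2' q1'.
    rewrite -?catA ?cat_cons s1 q1' q2' s2 subrK addrK; ring.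
  + move=> u w i wu q1 q2 k.
    have wu2 : wf_bword m.+2 (u ++ (i, true) :: w ++ Jw m.+1) by wfs.
    have s1 := Hi_skein HP k wu2.
    have s2 := Hi_skein HP (k + 1) wu.
    have := q1 k; have := q2 (k - 1).
    rewrite -?catA ?cat_cons => q2' q1'.
    rewrite -?catA ?cat_cons.
    have -> : Hi P m.+2 (u ++ (i, false) :: w ++ Jw m.+1) k =
       Hi P m.+2 (u ++ (i, true) :: w ++ Jw m.+1) k - Hi P m.+2 (u ++ w ++ Jw m.+1) (k - 1).
      by rewrite s1 addrK.
    rewrite q1' q2' s2 subrK addrK; ring.
- move=> a wa k.
  have wa1 : wf_bword m.+1 a by apply: (@wf_mono m) => //; nlia.
  have wa2 : wf_bword m.+2 a by apply: (@wf_mono m) => //; nlia.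
  rewrite JwS.
  have c1 : Hi P m.+2 (a ++ (m.+1, true) :: Jw m ++ [:: (m.+1, true)]) k =
            Hi P m.+2 ((m.+1, true) :: a ++ (m.+1, true) :: Jw m) k.
    have E : a ++ (m.+1, true) :: Jw m ++ [:: (m.+1, true)] =
             (a ++ (m.+1, true) :: Jw m) ++ [:: (m.+1, true)] by rewrite -catA.
    by rewrite E Hi_conj //; wfs.
  rewrite c1.
  have c2 : Hi P m.+2 ((m.+1, true) :: a ++ (m.+1, true) :: Jw m) k =
            Hi P m.+2 (a ++ (m.+1, true) :: (m.+1, true) :: Jw m) k.
    have h := breq_catr ((m.+1, true) :: Jw m)
       (@br_comm m.+2 m.+1 true a ltac:(nlia) ltac:(nlia) wa2 (far_wf wa (ltnSn _))).
    rewrite -catA cat_cons in h.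
    by rewrite (Hi_breq HP k h) //; wfs.
  rewrite c2 (Hi_skein HP) ?T1 ?addr0 //; last by wfs.
  have b1 : (0 < m.+1)%N by [].
  have b2 : (m.+1 < m.+2)%N by [].
  have h : breq m.+2 (a ++ (m.+1, false) :: (m.+1, true) :: Jw m) (a ++ Jw m) :=
    breq_cat a (Jw m) (@br_cancel m.+2 m.+1 false b1 b2).
  rewrite (Hi_breq HP k h); last by wfs.
  rewrite T2 //; last by wfs.
  destruct m as [|m].
    by rewrite Jw0 cats0.
  rewrite IHo //.
  by rewrite (T2 HP (M := m.+1)) // opprK.
- move=> m0 a1 a2 w1 w2 k.
  have w1' : wf_bword m.+2 a1 by apply: (@wf_mono m) => //; nlia.
  have w2' : wf_bword m.+2 a2 by apply: (@wf_mono m) => //; nlia.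
  rewrite T1 // oppr0 JwS.
  have c1 : Hi P m.+2 ((a1 ++ (m, true) :: a2) ++ (m.+1, true) :: Jw m ++ [:: (m.+1, true)]) k =
            Hi P m.+2 ((m.+1, true) :: a1 ++ (m, true) :: a2 ++ (m.+1, true) :: Jw m) k.
    have E : (a1 ++ (m, true) :: a2) ++ (m.+1, true) :: Jw m ++ [:: (m.+1, true)] =
             (a1 ++ (m, true) :: a2 ++ (m.+1, true) :: Jw m) ++ [:: (m.+1, true)].
      by rewrite -!catA !cat_cons -!catA.
    by rewrite E Hi_conj //; wfs.
  rewrite c1.
  have h1 := breq_catr ((m, true) :: a2 ++ (m.+1, true) :: Jw m)
       (@br_comm m.+2 m.+1 true a1 ltac:(nlia) ltac:(nlia) w1' (far_wf w1 (ltnSn _))).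
  rewrite -?catA ?cat_cons ?cat0s in h1 *.
  rewrite (Hi_breq HP k h1); last by wfs.
  have h2 := breq_cat (a1 ++ [:: (m.+1, true); (m, true)]) (Jw m)
       (brS (@br_comm m.+2 m.+1 true a2 ltac:(nlia) ltac:(nlia) w2' (far_wf w2 (ltnSn _)))).
  rewrite -?catA ?cat_cons ?cat0s in h2 *.
  rewrite (Hi_breq HP k h2); last by wfs.
  have h3 := breq_cat a1 (a2 ++ Jw m) (brS (@br_three m.+2 m m0 ltac:(nlia))).
  rewrite -?catA ?cat_cons ?cat0s in h3 *.
  rewrite (Hi_breq HP k h3); last by wfs.
  have E : a1 ++ (m, true) :: (m.+1, true) :: (m, true) :: a2 ++ Jw m =
           (a1 ++ [:: (m, true)]) ++ (m.+1, true) :: ((m, true) :: a2 ++ Jw m) by rewrite -catA.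
  by rewrite E T1 //; wfs.
Qed.

Lemma Kl P (HP : is_homfly_of_closures P) m : forall y, wf_bword m.+1 y ->
  forall k, Hi P m.+2 (y ++ Jw m.+1) k = - Hi P m.+1 y (k + 1).
Proof.
elim: m => [|m IH]; apply: Kstep => //.
Qed.

Lemma mainL P (HP : is_homfly_of_closures P) m : forall beta, wf_bword m.+1 beta -> forall k,
  Lo P m.+1 beta k = (-1) ^+ m * Hi P m.+1 (beta ++ garside m.+1 ++ garside m.+1) k.
Proof.
elim: m => [|m IH] beta wb k.
  rewrite (wf1 wb) /Lo /Hi expr0 mul1r (_ : garside 1 = [::]) //.
  congr (P _ _ _ _); rewrite es_nil; nlia.
pose Q := fun y => forall k, Lo P m.+2 y k = (-1) ^+ m.+1 * Hi P m.+2 (y ++ (garside m.+2) ++ (garside m.+2)) k.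
have wD : wf_bword m.+2 (garside m.+2) by apply: wf_garside.
have wD1 : wf_bword m.+1 (garside m.+1) by apply: wf_garside.
have wJ : wf_bword m.+2 (Jw m.+1) by apply: wf_Jw.
suff : forall y, wf_bword m.+2 y -> Q y by move=> /(_ beta wb); apply.
apply: (@bspan m.+1 Q).
- split.
  + move=> x x' h wx q k'.
    rewrite -(Lo_breq HP k' h wx) q; congr (_ * _).
    apply: (Hi_breq HP); [exact: breq_catr | wfs].
  + move=> u w i wu q1 q2 k'.
    have wu2 : wf_bword m.+2 (u ++ (i, true) :: w ++ (garside m.+2) ++ (garside m.+2)) by wfs.
    have := q1 k'; have := q2 (k' - 1).
    rewrite -?catA ?cat_cons => q2' q1'.
    rewrite -?catA ?cat_cons (Lo_skein HP _ wu) (Hi_skein HP _ wu2) q1' q2'; ring.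
  + move=> u w i wu q1 q2 k'.
    have wu2 : wf_bword m.+2 (u ++ (i, true) :: w ++ (garside m.+2) ++ (garside m.+2)) by wfs.
    have := q1 k'; have := q2 (k' - 1).
    rewrite -?catA ?cat_cons => q2' q1'.
    have s1 := Lo_skein HP k' wu; have s2 := Hi_skein HP k' wu2.
    rewrite -?catA ?cat_cons.
    have -> : Lo P m.+2 (u ++ (i, false) :: w) k' =
       Lo P m.+2 (u ++ (i, true) :: w) k' - Lo P m.+2 (u ++ w) (k' - 1) by rewrite s1 addrK.
    have -> : Hi P m.+2 (u ++ (i, false) :: w ++ (garside m.+2) ++ (garside m.+2)) k' =
       Hi P m.+2 (u ++ (i, true) :: w ++ (garside m.+2) ++ (garside m.+2)) k' - Hi P m.+2 (u ++ w ++ (garside m.+2) ++ (garside m.+2)) (k' - 1)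
       by rewrite s2 addrK.
    rewrite q1' q2'; ring.
- move=> a wa k'.
  rewrite (L2 HP) // IH //.
  have h := breq_catl a (Delta2 (ltnSn m.+1)).
  rewrite (Hi_breq HP k' h); last by wfs.
  have E : a ++ (garside m.+1) ++ (garside m.+1) ++ Jw m.+1 = (a ++ (garside m.+1) ++ (garside m.+1)) ++ Jw m.+1 by rewrite -!catA.
  rewrite E (Kl HP); last by wfs.
  rewrite exprS; ring.
- move=> _ a b wa wb' k'.
  rewrite (L1 HP) // (Lo_conj HP); last by wfs.
  rewrite IH; last by wfs.
  have h := breq_catl (a ++ (m.+1, true) :: b) (Delta2 (ltnSn m.+1)).
  rewrite (Hi_breq HP k' h); last by wfs.
  have E1 : (a ++ (m.+1, true) :: b) ++ (garside m.+1) ++ (garside m.+1) ++ Jw m.+1 =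
            (a ++ [:: (m.+1, true)]) ++ (b ++ (garside m.+1) ++ (garside m.+1) ++ Jw m.+1) by rewrite -!catA.
  rewrite E1 (Hi_conj HP (u := a ++ [:: (m.+1, true)])); last by wfs.
  have h2 := breq_cat (b ++ (garside m.+1) ++ (garside m.+1)) [:: (m.+1, true)] (brS (@J_word m.+2 m.+1 a (ltnSn _) wa)).
  have E2 : (b ++ (garside m.+1) ++ (garside m.+1) ++ Jw m.+1) ++ a ++ [:: (m.+1, true)] =
            (b ++ (garside m.+1) ++ (garside m.+1)) ++ (Jw m.+1 ++ a) ++ [:: (m.+1, true)] by rewrite -!catA.
  rewrite E2 (Hi_breq HP k' h2); last by rewrite -E2; wfs.
  have E3 : (b ++ (garside m.+1) ++ (garside m.+1)) ++ (a ++ Jw m.+1) ++ [:: (m.+1, true)] =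
            (b ++ (garside m.+1) ++ (garside m.+1) ++ a) ++ Jw m.+1 ++ [:: (m.+1, true)] by rewrite -!catA.
  rewrite E3  (Zl HP) //; last by wfs.
  rewrite (Kl HP); last by wfs.
  have E4 : b ++ (garside m.+1) ++ (garside m.+1) ++ a = (b ++ (garside m.+1) ++ (garside m.+1)) ++ a by rewrite -!catA.
  rewrite E4 (Hi_conj HP (u := b ++ garside m.+1 ++ garside m.+1)); last by wfs.
  rewrite subrK exprS -!catA; ring.
Qed.

Unset Implicit Arguments.
Set Strict Implicit.

Theorem theorem1p5 (P : nat -> bword -> laurent2) (HP : is_homfly_of_closures P)
    (n : nat) (beta : bword) :
  (1 <= n)%N -> wf_bword n beta ->
  forall k : int,
    P n beta (exp_sum beta - n%:Z + 1) k =
    (-1) ^+ n.-1 *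
      P n (beta ++ garside n ++ garside n) (exp_sum beta + (n ^ 2)%:Z - 1) k.
Proof.
case: n => [//|m] _ wb k.
have := mainL HP wb k; rewrite /Lo /Hi => -> /=.
congr (_ * P _ _ _ _).
rewrite !es_cat addrA -(addrA (exp_sum beta)) es_garside2 -mulnn mulnSr /=.
elia.
Qed.
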